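(* Let $\mathcal E$ be a nest on a complex Banach space $X$, let $\Phi$ be a support function on $\mathcal E$ and let $T\in\mathcal M(\Phi)$ be an operator of rank $n$. Then $T$ can be written as a sum of $n$ rank-one operators each lying in $\mathcal M(\Phi)$.
   Context: A nest $\mathcal E$ on $X$ is a family of closed linear subspaces of $X$, totally ordered by inclusion, containing $\{0\}$ and $X$, closed under arbitrary meets (intersections) and joins (norm-closed linear spans of unions). A support function on $\mathcal E$ is an inclusion-preserving map $\Phi:\mathcal E\to\mathcal E$. $\mathcal M(\Phi)=\{T\in\mathcal B(X): TE\subseteq\Phi(E)\ \forall E\in\mathcal E\}$. *)

(* Defs.v *)
From mathcomp Require Import all_boot all_order all_algebra.
From mathcomp Require Import complex.
From mathcomp Require Import all_classical all_reals all_analysis.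
Import GRing.Theory Num.Theory.
Set Implicit Arguments. Unset Strict Implicit. Unset Printing Implicit Defensive.
Local Open Scope classical_set_scope.
Local Open Scope ring_scope.

(* The complex field over a real type R is R[i] (mathcomp-real-closed).
   A complex Banach space is a completeNormedModType R[i]. *)

Section Nests.
Variables (R : realType) (X : completeNormedModType R[i]).

Definition subspace (E : set X) : Prop :=
  E 0 /\ (forall x y, E x -> E y -> E (x + y)) /\
  (forall (a : R[i]) x, E x -> E (a *: x)).

Definition closed_subspace (E : set X) : Prop := subspace E /\ closed E.

Definition lin_span (S : set X) : set X :=
  [set x | exists (m : nat) (c : 'I_m -> R[i]) (v : 'I_m -> X),
     (forall i, S (v i)) /\ x = \sum_(i < m) c i *: v i].

Definition closed_span (S : set X) : set X := closure (lin_span S).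

Definition nest (N : set (set X)) : Prop :=
  (forall E, N E -> closed_subspace E) /\
  (forall E F, N E -> N F -> E `<=` F \/ F `<=` E) /\
  N [set 0] /\ N setT /\
  (forall F : set (set X), F `<=` N -> N (\bigcap_(E in F) E)) /\
  (forall F : set (set X), F `<=` N -> N (closed_span (\bigcup_(E in F) E))).

Definition support_function (N : set (set X)) (Phi : set X -> set X) : Prop :=
  (forall E, N E -> N (Phi E)) /\
  (forall E F, N E -> N F -> E `<=` F -> Phi E `<=` Phi F).

(* bounded (= continuous) linear operator on X *)
Definition bounded_op (T : X -> X) : Prop :=
  (forall (a : R[i]) x y, T (a *: x + y) = a *: T x + T y) /\ continuous T.

Definition M_Phi (N : set (set X)) (Phi : set X -> set X) (T : X -> X) : Prop :=
  bounded_op T /\ (forall E, N E -> T @` E `<=` Phi E).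

Definition has_rank (T : X -> X) (n : nat) : Prop :=
  exists v : 'I_n -> X,
    (forall c : 'I_n -> R[i], \sum_(i < n) c i *: v i = 0 -> forall i, c i = 0) /\
    range T = [set \sum_(i < n) c i *: v i | c in [set: 'I_n -> R[i]]].

End Nests.

(* Main.v *)
Require Import Defs.
From mathcomp Require Import all_boot all_order all_algebra.
From mathcomp Require Import complex.
From mathcomp Require Import all_classical all_reals all_analysis.
From mathcomp Require Import lra.
Import GRing.Theory Num.Theory.
Import Order.TTheory numFieldNormedType.Exports.
Local Open Scope classical_set_scope.
Local Open Scope ring_scope.
Set Implicit Arguments. Unset Strict Implicit. Unset Printing Implicit Defensive.
Section A.
Variable R : realType.
Local Notation C := R[i].
Local Notation Re := complex.Re.
Local Notation Im := complex.Im.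
Local Open Scope complex_scope.

Lemma ReB (x y : C) : Re (x - y) = Re x - Re y. Proof. by case: x => a b; case: y => c d. Qed.
Lemma ImB (x y : C) : Im (x - y) = Im x - Im y. Proof. by case: x => a b; case: y => c d. Qed.

Lemma normC_Re (z : C) : (`|Re z|)%:C <= `|z|.
Proof.
rewrite normc_def lecR -sqrtr_sqr; apply: ler_wsqrtr.
by rewrite lerDl sqr_ge0.
Qed.

Lemma normC_Im (z : C) : (`|Im z|)%:C <= `|z|.
Proof.
rewrite normc_def lecR -sqrtr_sqr; apply: ler_wsqrtr.
by rewrite lerDr sqr_ge0.
Qed.

Lemma normC_le (z : C) : `|z| <= (`|Re z| + `|Im z|)%:C.
Proof.
rewrite normc_def lecR.
rewrite -(ger0_norm (addr_ge0 (normr_ge0 (Re z)) (normr_ge0 (Im z)))) -sqrtr_sqr.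
apply: ler_wsqrtr.
rewrite -(real_normK (num_real (Re z))) -(real_normK (num_real (Im z))).
have h1 := normr_ge0 (Re z); have h2 := normr_ge0 (Im z).
rewrite sqrrD; nra.
Qed.

Lemma C_gt0 (e : C) : 0 < e -> 0 < Re e /\ e = (Re e)%:C.
Proof. by case: e => a b; rewrite ltcE /= => /andP[/eqP -> ha]. Qed.

Lemma R_complete (a : nat -> R) :
  (forall e : R, 0 < e -> exists N, forall n m, (N <= n)%N -> (N <= m)%N -> `|a n - a m| < e) ->
  exists l, forall e : R, 0 < e -> exists N, forall n, (N <= n)%N -> `|a n - l| < e.
Proof.
move=> H.
have ca : cauchy (a @ \oo).
  apply: cauchy_exP => e e0.
  have [N HN] := H e e0.
  exists (a N); exists N => // n /= Nn.
  rewrite /ball /=. exact: HN.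
have [l Hl] := (cvg_ex _).1 ((cauchy_cvgP _).1 ca).
exists l => e e0.
have := (cvgrPdist_lt _ _).1 Hl e e0.
move=> [N _ HN]; exists N => n Nn.
rewrite distrC; exact: HN.
Qed.

Lemma C_complete (z : nat -> C) :
  (forall e : C, 0 < e -> exists N, forall n m, (N <= n)%N -> (N <= m)%N -> `|z n - z m| < e) ->
  exists l, forall e : C, 0 < e -> exists N, forall n, (N <= n)%N -> `|z n - l| < e.
Proof.
move=> H.
have HR : forall e : R, 0 < e -> exists N, forall n m, (N <= n)%N -> (N <= m)%N -> `|z n - z m| < e%:C.
  by move=> e e0; apply: H; rewrite ltcR.
have [la Ha] : exists l, forall e : R, 0 < e -> exists N, forall n, (N <= n)%N -> `|Re (z n) - l| < e.
  apply: R_complete => e e0; have [N HN] := HR e e0; exists N => n m Nn Nm.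
  rewrite -ReB -ltcR; exact: le_lt_trans (normC_Re _) (HN _ _ Nn Nm).
have [lb Hb] : exists l, forall e : R, 0 < e -> exists N, forall n, (N <= n)%N -> `|Im (z n) - l| < e.
  apply: R_complete => e e0; have [N HN] := HR e e0; exists N => n m Nn Nm.
  rewrite -ImB -ltcR; exact: le_lt_trans (normC_Im _) (HN _ _ Nn Nm).
exists (la +i* lb) => e /C_gt0 [e0 ->].
have e20 : 0 < Re e / 2 by rewrite divr_gt0.
have [N1 H1] := Ha _ e20; have [N2 H2] := Hb _ e20.
exists (maxn N1 N2) => n Nn.
apply: le_lt_trans (normC_le _) _; rewrite ltcR ReB ImB /=.
have := H1 n (leq_trans (leq_maxl _ _) Nn); have := H2 n (leq_trans (leq_maxr _ _) Nn).
move=> h2 h1; lra.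
Qed.

End A.

Section B.
Variables (R : realType) (X : completeNormedModType R[i]).
Local Notation C := R[i].

Definition lc k (v : 'I_k -> X) (c : 'I_k -> C) : X := \sum_(i < k) c i *: v i.
Definition indep k (v : 'I_k -> X) := forall c, lc v c = 0 -> forall i, c i = 0.

Lemma lcB k (v : 'I_k -> X) c1 c2 : lc v (fun i => c1 i - c2 i) = lc v c1 - lc v c2.
Proof. by rewrite /lc -sumrB; apply: eq_bigr => i _; rewrite scalerBl. Qed.
Lemma lcD k (v : 'I_k -> X) c1 c2 : lc v (fun i => c1 i + c2 i) = lc v c1 + lc v c2.
Proof. by rewrite /lc -big_split; apply: eq_bigr => i _; rewrite scalerDl. Qed.
Lemma lcZ k (v : 'I_k -> X) a c : lc v (fun i => a * c i) = a *: lc v c.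
Proof. by rewrite /lc scaler_sumr; apply: eq_bigr => i _; rewrite scalerA. Qed.
Lemma lcN k (v : 'I_k -> X) c : lc v (fun i => - c i) = - lc v c.
Proof. by rewrite /lc -sumrN; apply: eq_bigr => i _; rewrite scaleNr. Qed.
Lemma lc0 k (v : 'I_k -> X) : lc v (fun=> 0) = 0.
Proof. by rewrite /lc big1 // => i _; rewrite scale0r. Qed.

Lemma indep_inj k (v : 'I_k -> X) c1 c2 : indep v -> lc v c1 = lc v c2 -> forall i, c1 i = c2 i.
Proof.
move=> hv e i; apply/eqP; rewrite -subr_eq0; apply/eqP.
by apply: (hv (fun i => c1 i - c2 i)); rewrite lcB e subrr.
Qed.

Definition ext k (p : 'I_k.+1) (c : 'I_k -> C) (a : C) (i : 'I_k.+1) : C :=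
  if unlift p i is Some j then c j else a.

Lemma ext_p k p c a : @ext k p c a p = a.
Proof. by rewrite /ext unlift_none. Qed.
Lemma ext_lift k p c a j : @ext k p c a (lift p j) = c j.
Proof. by rewrite /ext liftK. Qed.

Lemma lc_split k (v : 'I_k.+1 -> X) p c :
  lc v c = c p *: v p + lc (fun j => v (lift p j)) (fun j => c (lift p j)).
Proof. by rewrite /lc (bigD1_ord p) //. Qed.

Lemma lc_ext k (v : 'I_k.+1 -> X) p c a :
  lc v (ext p c a) = a *: v p + lc (fun j => v (lift p j)) c.
Proof.
rewrite (lc_split _ p) ext_p; congr (_ + _).
by apply: eq_bigr => j _; rewrite ext_lift.
Qed.

Lemma indep_lift k (v : 'I_k.+1 -> X) p : indep v -> indep (fun j => v (lift p j)).
Proof.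
move=> hv c hc j.
have := hv (ext p c 0); rewrite lc_ext scale0r add0r => /(_ hc (lift p j)).
by rewrite ext_lift.
Qed.

Lemma norm_eq0_small (x : X) : (forall e : C, 0 < e -> `|x| < e) -> x = 0.
Proof.
move=> H; apply/eqP; apply: contraT => hx.
have h0 : 0 < `|x| by rewrite normr_gt0.
by have := H _ h0; rewrite ltxx.
Qed.


Local Open Scope complex_scope.
Lemma small_inv (e : C) : 0 < e -> exists N, forall n, (N <= n)%N -> ((n.+1)%:R : C)^-1 < e.
Proof.
move=> /C_gt0 [e0 ->].
set r := complex.Re e.
have ri0 : 0 <= r^-1 by rewrite invr_ge0 ltW.
exists (Num.bound r^-1) => n Nn.
have h1 : r^-1 < (n.+1)%:R.
  apply: lt_le_trans (archi_boundP ri0) _; rewrite ler_nat; exact: leqW.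
have h2 : ((n.+1)%:R : R)^-1 < r.
  rewrite -[X in _ < X]invrK; rewrite ltf_pV2 // ?posrE ?invr_gt0 //.
have -> : ((n.+1)%:R : C) = ((n.+1)%:R : R)%:C by rewrite rmorph_nat.
by rewrite -fmorphV ltcR.
Qed.

Lemma small (e B : C) : 0 < e -> 0 <= B -> exists N, forall n, (N <= n)%N -> B * ((n.+1)%:R : C)^-1 < e.
Proof.
move=> e0 B0.
have B1 : 0 < B + 1 by rewrite ltr_wpDl // ltr01.
have e'0 : 0 < e / (B + 1) by rewrite divr_gt0.
have [N HN] := small_inv e'0.
exists N => n Nn.
apply: le_lt_trans (ler_wpM2l B0 (ltW (HN n Nn))) _.
have he : (B + 1) * (e / (B + 1)) = e by rewrite mulrC divfK // gt_eqF.
rewrite -[X in _ < X]he.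
by rewrite ltr_pM2r // ltrDl ltr01.
Qed.

Lemma dist_pos k (w : 'I_k -> X) (u : X) (K : C) :
  0 <= K -> (forall c i, `|c i| <= K * `|lc w c|) ->
  (forall l, u <> lc w l) ->
  exists d : C, 0 < d /\ forall c, d <= `|u - lc w c|.
Proof.
move=> K0 HK hu.
apply: contrapT => nD.
have H1 : forall n : nat, exists c, `|u - lc w c| < ((n.+1)%:R : C)^-1.
  move=> n; apply: contrapT => nc; apply: nD.
  have ip : 0 < ((n.+1)%:R : C)^-1 by rewrite invr_gt0 ltr0n.
  exists ((n.+1)%:R)^-1; split => // c.
  case: (boolP (`|u - lc w c| < ((n.+1)%:R)^-1)) => hc.
    by exfalso; apply: nc; exists c.
  by rewrite real_leNgt // ?(gtr0_real ip) ?normr_real.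
have [cs Hcs] := boolp.choice H1.
have Hcau : forall j, exists l, forall e, 0 < e -> exists N, forall n, (N <= n)%N -> `|cs n j - l| < e.
  move=> j; apply: C_complete => e e0.
  have e20 : 0 < e / 2 by rewrite divr_gt0 // ltr0n.
  have [N HN] := small e20 K0.
  exists N => n m Nn Nm.
  apply: le_lt_trans (HK (fun j => cs n j - cs m j) j) _.
  rewrite lcB.
  have -> : lc w (cs n) - lc w (cs m) = (u - lc w (cs m)) - (u - lc w (cs n)).
    by rewrite opprB [RHS]addrC [RHS]addrA subrK.
  apply: le_lt_trans (ler_wpM2l K0 (ler_normB _ _)) _.
  rewrite mulrDr [X in _ < X]splitr.
  apply: ltrD.
    exact: le_lt_trans (ler_wpM2l K0 (ltW (Hcs m))) (HN m Nm).
  exact: le_lt_trans (ler_wpM2l K0 (ltW (Hcs n))) (HN n Nn).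
have [l Hl] := boolp.choice Hcau.
apply: (hu l).
apply/eqP; rewrite -subr_eq0; apply/eqP; apply: norm_eq0_small => e e0.
set S := \sum_j `|w j|.
have S0 : 0 <= S by rewrite sumr_ge0 // => j _; exact: normr_ge0.
have S1 : 0 < S + 1 by rewrite ltr_wpDl // ltr01.
have e20 : 0 < e / 2 by rewrite divr_gt0 // ltr0n.
set e1 := e / 2 / (S + 1).
have e10 : 0 < e1 by rewrite divr_gt0.
have [Nf HNf] := boolp.choice (fun j => Hl j e1 e10).
have [N0 HN0] := small_inv e20.
set N := maxn N0 (\max_j Nf j).
have hA : `|u - lc w (cs N)| < e / 2 := lt_trans (Hcs N) (HN0 N (leq_maxl _ _)).
have hB : `|lc w (cs N) - lc w l| <= e / 2.
  rewrite -lcB /lc; apply: le_trans (ler_norm_sum _ _ _) _.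
  apply: (@le_trans _ _ (\sum_j e1 * `|w j|)).
    apply: ler_sum => j _; rewrite normrZ.
    have Hj : (Nf j <= N)%N by exact: leq_trans (leq_bigmax j) (leq_maxr _ _).
    exact: (ler_wpM2r (normr_ge0 (w j)) (ltW (HNf j N Hj))).
  rewrite -mulr_sumr -/S.
  apply: le_trans (ler_wpM2l (ltW e10) (_ : S <= S + 1)) _; first by rewrite lerDl ler01.
  by rewrite /e1 divfK // gt_eqF.
apply: le_lt_trans (ler_distD (lc w (cs N)) _ _) _.
by rewrite [X in _ < X]splitr; apply: ltr_leD.
Qed.

Lemma lerMr (a b y : C) : 0 <= y -> a <= b -> a * y <= b * y.
Proof. by move=> h1 h2; rewrite -subr_ge0 -mulrBl mulr_ge0 // subr_ge0. Qed.

Lemma lerMl (a b y : C) : 0 <= y -> a <= b -> y * a <= y * b.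
Proof. by move=> h1 h2; rewrite -subr_ge0 -mulrBr mulr_ge0 // subr_ge0. Qed.

Lemma coord_bound k (v : 'I_k -> X) : indep v ->
  exists K : C, 0 <= K /\ forall c i, `|c i| <= K * `|lc v c|.
Proof.
elim: k v => [|k IH] v hv.
  by exists 0; split => // c [].
pose p := @ord_max k.
pose w := fun j => v (lift p j).
pose u := v p.
have hw : indep w := @indep_lift _ v p hv.
have [Kw [Kw0 HKw]] := IH w hw.
have hu : forall l, u <> lc w l.
  move=> l hl; have := hv (ext p (fun j => - l j) 1).
  rewrite lc_ext lcN scale1r -/u -/w hl subrr => /(_ erefl p).
  by rewrite ext_p => /eqP; rewrite oner_eq0.
have [d [d0 Hd]] := dist_pos Kw0 HKw hu.
have di0 : 0 <= d^-1 by rewrite invr_ge0 ltW.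
have B0 : 0 <= Kw * (1 + d^-1 * `|u|) by rewrite mulr_ge0 // addr_ge0 // mulr_ge0.
exists (d^-1 + Kw * (1 + d^-1 * `|u|)); split; first by rewrite addr_ge0.
move=> c i.
set x := lc v c.
have hx : x = c p *: u + lc w (fun j => c (lift p j)) := lc_split v p c.
have Hp : `|c p| <= d^-1 * `|x|.
  case: (eqVneq (c p) 0) => [->|cp0]; first by rewrite normr0 mulr_ge0.
  have -> : x = c p *: (u - lc w (fun j => - c (lift p j) / c p)).
    rewrite hx scalerBr -lcZ.
    have -> : (fun j => c p * (- c (lift p j) / c p)) = (fun j => - c (lift p j)).
      by apply: funext => j; rewrite mulrC divfK.
    by rewrite lcN opprK.
  rewrite normrZ mulrCA; apply: ler_peMr; first exact: normr_ge0.
  by rewrite mulrC ler_pdivlMr // mul1r; exact: Hd.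
have Hi : forall j, `|c (lift p j)| <= Kw * (1 + d^-1 * `|u|) * `|x|.
  move=> j; apply: le_trans (HKw (fun j => c (lift p j)) j) _.
  rewrite -mulrA; apply: lerMl Kw0 _.
  have -> : lc w (fun j => c (lift p j)) = x - c p *: u by rewrite hx addrC addKr.
  apply: le_trans (ler_normB _ _) _.
  rewrite normrZ mulrDl mul1r lerD2l.
  rewrite mulrAC; exact: lerMr (normr_ge0 _) Hp.
case: (unliftP p i) => [j ->|->].
  apply: le_trans (Hi j) _; apply: lerMr; first exact: normr_ge0.
  by rewrite lerDr.
apply: le_trans Hp _; apply: lerMr; first exact: normr_ge0.
by rewrite lerDl.
Qed.

End B.
Section Mx.
Variable F : fieldType.

Definition rsub m (S : 'rV[F]_m -> Prop) :=
  S 0 /\ (forall x y, S x -> S y -> S (x + y)) /\ (forall a x, S x -> S (a *: x)).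

Lemma rsub_mul m k (S : 'rV[F]_m -> Prop) (u : 'rV[F]_k) (B : 'M[F]_(k, m)) :
  rsub S -> (forall i, S (row i B)) -> S (u *m B).
Proof.
move=> [S0 [SD SZ]] HB; rewrite mulmx_sum_row.
by apply: (big_ind S) => // i _; apply: SZ.
Qed.

Lemma span_mx m (S : 'rV[F]_m -> Prop) : rsub S ->
  exists A : 'M[F]_m, forall r, S r <-> (r <= A)%MS.
Proof.
move=> hS.
pose Pk k := exists B : 'M[F]_m, (forall i, S (row i B)) /\ \rank B = k.
have Pex : exists k, `[< Pk k >].
  exists 0%N; apply/asboolP; exists 0; split; last exact: mxrank0.
  by move=> i; rewrite row0; case: hS.
have Pub : forall k, `[< Pk k >] -> (k <= m)%N.
  by move=> k /asboolP [B [_ <-]]; exact: rank_leq_col.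
case: (ex_maxnP Pex Pub) => k0 /asboolP [B0 [HB0 rk0]] Hmax.
exists B0 => r; split; last first.
  by move=> /submxP [D ->]; apply: rsub_mul.
move=> Sr; apply: contraT => nr.
pose B1 := (B0 + r)%MS.
have lt : (B0 < B1)%MS.
  rewrite ltmxE addsmxSl /=; apply: contra nr => h.
  exact: submx_trans (addsmxSr B0 r) h.
have HB1 : forall i, S (row i B1).
  move=> i; have : (row i B1 <= col_mx B0 r)%MS.
    apply: submx_trans (row_sub i B1) _; by rewrite /B1 addsmxE.
  move=> /submxP [D ->]; rewrite -[D]hsubmxK mul_row_col.
  have [S0 [SD SZ]] := hS; apply: SD; apply: rsub_mul => //.
  by move=> j; rewrite row_id.
have := Hmax (\rank B1); rewrite -rk0 leqNgt rank_ltmx // => H; apply: H.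
by apply/asboolP; exists B1.
Qed.

Lemma rank_pos m n' (A : 'M[F]_(n', m)) (r : 'rV[F]_m) : r != 0 -> (r <= A)%MS -> (0 < \rank A)%N.
Proof.
move=> r0 rA; rewrite lt0n mxrank_eq0; apply: contra r0 => /eqP A0.
by move: rA; rewrite A0 => /submx0null ->.
Qed.

End Mx.

Section M.
Variables (R : realType) (X : completeNormedModType R[i]).
Local Notation C := R[i].

Lemma lin_props (T : X -> X) : (forall (a : C) x y, T (a *: x + y) = a *: T x + T y) ->
  [/\ T 0 = 0, forall x y, T (x + y) = T x + T y,
      forall (a : C) x, T (a *: x) = a *: T x & forall x y, T (x - y) = T x - T y].
Proof.
move=> hT.
have T0 : T 0 = 0.
  have h := hT 1 0 0; rewrite !scale1r addr0 in h.
  by apply: (addrI (T 0)); rewrite addr0 -h.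
have TD : forall x y, T (x + y) = T x + T y by move=> x y; rewrite -[x]scale1r hT !scale1r.
split => //.
  by move=> a x; rewrite -[a *: x]addr0 hT T0 addr0.
by move=> x y; rewrite addrC -scaleN1r hT scaleN1r addrC.
Qed.

Lemma cont_dom (V W : normedModType C) (g : X -> V) (h : X -> W) (K : C) :
  0 <= K -> continuous h -> (forall y y0, `|g y0 - g y| <= K * `|h y0 - h y|) -> continuous g.
Proof.
move=> K0 hc H y0; rewrite /continuous_at; apply/(@cvgrPdist_lt _ V) => e e0.
have K1 : 0 < K + 1 by rewrite ltr_wpDl // ltr01.
have e'0 : 0 < e / (K + 1) by rewrite divr_gt0.
have := (cvgrPdist_lt _ _).1 (hc y0) _ e'0.
move=> Hn; near=> y.
have hy : `|h y0 - h y| < e / (K + 1) by near: y; exact: Hn.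
apply: le_lt_trans (H y y0) _.
apply: le_lt_trans (lerMl K0 (ltW hy)) _.
have he : (K + 1) * (e / (K + 1)) = e by rewrite mulrC divfK // gt_eqF.
rewrite -[X in _ < X]he.
by rewrite ltr_pM2r // ltrDl ltr01.
Unshelve. all: by end_near.
Qed.

Lemma lc_zero_row k (v : 'I_k -> X) : lc v (fun i => (0 : 'rV[C]_k) 0 i) = 0.
Proof.
have -> : (fun i => (0 : 'rV[C]_k) 0 i) = fun=> 0 by apply: funext => i; rewrite mxE.
exact: lc0.
Qed.

Lemma stepA (N : set (set X)) (T : X -> X) n (v : 'I_n.+1 -> X) :
  nest N -> (forall (a : C) x y, T (a *: x + y) = a *: T x + T y) -> indep v ->
  (forall y, exists c, T y = lc v c) -> (forall c, exists y, T y = lc v c) ->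
  exists c0 : 'I_n.+1 -> C, exists p, c0 p != 0 /\
    (forall E, N E -> forall e, E e -> T e <> 0 -> exists e', E e' /\ T e' = lc v c0).
Proof.
move=> [hNs [hNt [_ [hNT _]]]] hT hv hco hsur.
have [T0 TD TZ TB] := lin_props hT.
pose S E (r : 'rV[C]_n.+1) := exists e, E e /\ T e = lc v (fun i => r 0 i).
have Ssub : forall E, N E -> rsub (S E).
  move=> E NE; have [[E0 [ED EZ]] _] := hNs E NE.
  split; first by exists 0; split => //; rewrite T0 lc_zero_row.
  split.
    move=> x y [ex [Ex hx]] [ey [Ey hy]]; exists (ex + ey); split; first exact: ED.
    by rewrite TD hx hy -lcD; congr lc; apply: funext => i; rewrite mxE.
  move=> a x [ex [Ex hx]]; exists (a *: ex); split; first exact: EZ.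
  by rewrite TZ hx -lcZ; congr lc; apply: funext => i; rewrite mxE.
have [Af HAf] : exists Af : set X -> 'M[C]_n.+1,
    forall E, N E -> forall r, S E r <-> (r <= Af E)%MS.
  have : forall E, exists A : 'M[C]_n.+1, N E -> forall r, S E r <-> (r <= A)%MS.
    move=> E; case: (pselect (N E)) => NE.
      by have [A HA] := span_mx (Ssub E NE); exists A.
    by exists 0.
  by move=> /boolp.choice [Af HAf]; exists Af.
pose p0 := @ord0 n.
pose d0 := \row_(i < n.+1) ((i == p0)%:R : C).
have lcd : lc v (fun i => d0 0 i) = v p0.
  rewrite (lc_split v p0) mxE eqxx scale1r.
  have -> : (fun j => d0 0 (lift p0 j)) = fun=> 0.
    by apply: funext => j; rewrite mxE eq_sym (negbTE (neq_lift _ _)).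
  by rewrite lc0 addr0.
have d0nz : d0 != 0.
  apply/eqP => h; have := congr1 (fun M : 'rV[C]_n.+1 => M 0 p0) h.
  by rewrite !mxE eqxx => /eqP; rewrite oner_eq0.
have Spos : forall E, N E -> forall r, r != 0 -> S E r -> (0 < \rank (Af E))%N.
  by move=> E NE r r0 Sr; apply: rank_pos r0 _; exact: (HAf E NE r).1 Sr.
pose Pm k := `[< exists E, N E /\ \rank (Af E) = k /\ (0 < k)%N >].
have Pex : exists k, Pm k.
  exists (\rank (Af setT)); apply/asboolP; exists setT; split => //; split => //.
  apply: (Spos setT hNT d0 d0nz).
  by have [y hy] := hsur (fun i => d0 0 i); exists y.
case: (ex_minnP Pex) => ks /asboolP [Es [NEs [rks ks0]]] Hmin.
set As := Af Es in rks.
have As0 : As != 0 by rewrite -mxrank_eq0 rks -lt0n.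
have [i0 ri0] : exists i, row i As != 0.
  case: (pselect (exists i, row i As != 0)) => // H; exfalso.
  move/eqP: As0; apply; apply/row_matrixP => i; rewrite row0; apply/eqP.
  apply: contrapT => hi; apply: H; exists i; apply/negP; exact: hi.
set r0 := row i0 As.
have Sr0 : S Es r0 := (HAf Es NEs r0).2 (row_sub i0 As).
have [p hp] : exists p, r0 0 p != 0.
  case: (pselect (exists p, r0 0 p != 0)) => // H; exfalso.
  move/eqP: ri0; apply; apply/rowP => j; rewrite [RHS]mxE; apply/eqP.
  apply: contrapT => hj; apply: H; exists j; apply/negP; exact: hj.
exists (fun i => r0 0 i), p; split => //.
move=> E NE e Ee Te.
have [ce hce] := hco e.
pose re := \row_i ce i.
have hre : lc v (fun i => re 0 i) = lc v ce by congr lc; apply: funext => i; rewrite mxE.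
have Sre : S E re by exists e; split => //; rewrite hre.
have re0 : re != 0.
  by apply/eqP => h; apply: Te; rewrite hce -hre h lc_zero_row.
have rEpos := Spos E NE re re0 Sre.
case: (hNt E Es NE NEs) => hsub.
  have AEs : (Af E <= As)%MS.
    apply/row_subP => i; apply: (HAf Es NEs _).1.
    have [e' [E'e he']] := (HAf E NE _).2 (row_sub i (Af E)).
    by exists e'; split => //; apply: hsub.
  have hle : (ks <= \rank (Af E))%N by apply: Hmin; apply/asboolP; exists E.
  rewrite -rks in hle.
  have heq : (Af E == As)%MS.
    by rewrite -(mxrank_leqif_eq AEs).2 eqn_leq (mxrank_leqif_eq AEs).1 hle.
  have r0E : (r0 <= Af E)%MS.
    by move: heq => /andP [_ h]; exact: submx_trans (row_sub i0 As) h.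
  exact: (HAf E NE r0).2 r0E.
have [e' [Ese' he']] := Sr0; exists e'; split => //; exact: hsub.
Qed.

Lemma lc_delta k (v : 'I_k.+1 -> X) (p : 'I_k.+1) : lc v (fun i => ((i == p)%:R : C)) = v p.
Proof.
rewrite (lc_split v p) eqxx scale1r.
have -> : (fun j => ((lift p j == p)%:R : C)) = fun=> 0.
  by apply: funext => j; rewrite eq_sym (negbTE (neq_lift _ _)).
by rewrite lc0 addr0.
Qed.

Lemma main_ind (N : set (set X)) (Phi : set X -> set X) n : nest N -> support_function N Phi ->
  forall T, M_Phi N Phi T -> has_rank T n ->
  exists Ts : 'I_n -> X -> X,
    (forall i, has_rank (Ts i) 1 /\ M_Phi N Phi (Ts i)) /\
    (forall x, T x = \sum_(i < n) Ts i x).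
Proof.
move=> hN hPhi; elim: n => [|n IH] T [[hT hTc] hTE] [v [hv hr]].
  exists (fun _ _ => 0); split; first by case.
  move=> x; rewrite big_ord0.
  have : range T (T x) by exists x.
  by rewrite hr => -[c _ <-]; rewrite big_ord0.
have hco : forall y, exists c, T y = lc v c.
  move=> y; have : range T (T y) by exists y.
  by rewrite hr => -[c _ hc]; exists c.
have hsur : forall c, exists y, T y = lc v c.
  move=> c; have : [set \sum_(i < n.+1) c i *: v i | c in [set: 'I_n.+1 -> C]] (lc v c).
    by exists c.
  by rewrite -hr => -[y _ hy]; exists y.
have hvi : indep v by exact: hv.
have [T0 TD TZ TB] := lin_props hT.
have [c0 [p [hp HP]]] := stepA hN hT hvi hco hsur.
set x := lc v c0 in HP.
have [cT HcT] := boolp.choice hco.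
have cT_lin : forall a y z i, cT (a *: y + z) i = a * cT y i + cT z i.
  move=> a y z; apply: indep_inj hvi _.
  by rewrite -HcT lcD lcZ -!HcT; exact: hT.
pose f y := cT y p / c0 p.
have f_lin : forall a y z, f (a *: y + z) = a * f y + f z.
  by move=> a y z; rewrite /f cT_lin mulrDl mulrA.
have fT0 : forall y, T y = 0 -> f y = 0.
  move=> y hy; have h : lc v (cT y) = lc v (fun=> 0) by rewrite -HcT hy lc0.
  by rewrite /f (indep_inj hvi h p) mul0r.
have f0 : f 0 = 0 by apply: fT0.
have fZ : forall a y, f (a *: y) = a * f y.
  by move=> a y; rewrite -[a *: y]addr0 f_lin f0 addr0.
have fB : forall y y0, f y0 - f y = f (y0 - y).
  move=> y y0; have e1 : y0 - y = (-1) *: y + y0 by rewrite scaleN1r addrC.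
  by rewrite e1 f_lin mulN1r addrC.
have x0 : x != 0.
  by apply/negP => /eqP h; move: hp; rewrite (hvi c0 h p) eqxx.
have [K [K0 HK]] := coord_bound hvi.
have Kc0 : 0 <= K / `|c0 p| by rewrite divr_ge0 // normr_ge0.
have f_bound : forall y y0, `|f y0 - f y| <= (K / `|c0 p|) * `|T y0 - T y|.
  move=> y y0; rewrite fB -TB /f normrM normfV mulrAC.
  apply: lerMr; first by rewrite invr_ge0 normr_ge0.
  by rewrite HcT; exact: HK.
pose R1 y := f y *: x.
have R1_bound : forall y y0, `|R1 y0 - R1 y| <= (K / `|c0 p| * `|x|) * `|T y0 - T y|.
  move=> y y0; rewrite /R1 -scalerBl normrZ mulrAC.
  exact: lerMr (normr_ge0 _) (f_bound y y0).
have R1c : continuous R1.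
  apply: (cont_dom _ hTc R1_bound); by rewrite mulr_ge0 // normr_ge0.
have R1_lin : forall (a : C) y z, R1 (a *: y + z) = a *: R1 y + R1 z.
  by move=> a y z; rewrite /R1 f_lin scalerDl scalerA.
have PhiS : forall E, N E -> Phi E 0 /\ (forall x y, Phi E x -> Phi E y -> Phi E (x + y)) /\
    (forall (a : C) x, Phi E x -> Phi E (a *: x)).
  by move=> E NE; have [h _] := hN.1 _ (hPhi.1 E NE); exact: h.
have R1E : forall E, N E -> forall e, E e -> Phi E (R1 e).
  move=> E NE e Ee; have [P0 [PD PZ]] := PhiS E NE.
  case: (eqVneq (f e) 0) => [fe0|fe0]; first by rewrite /R1 fe0 scale0r.
  have Te : T e <> 0 by move=> h; move: fe0; rewrite fT0 ?eqxx.
  have [e' [Ee' he']] := HP E NE e Ee Te.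
  have Px : Phi E x by rewrite -he'; apply: hTE => //; exists e'.
  exact: PZ.
pose T' y := T y - R1 y.
have T'c : continuous T'.
  apply: (cont_dom (K := 1 + K / `|c0 p| * `|x|) _ hTc).
    by rewrite addr_ge0 // mulr_ge0 // normr_ge0.
  move=> y y0; rewrite /T' opprD addrACA -opprD.
  apply: le_trans (ler_normB _ _) _.
  by rewrite mulrDl mul1r lerD2l R1_bound.
have T'_lin : forall (a : C) y z, T' (a *: y + z) = a *: T' y + T' z.
  by move=> a y z; rewrite /T' hT R1_lin opprD addrACA scalerBr.
have T'E : forall E, N E -> T' @` E `<=` Phi E.
  move=> E NE _ [e Ee <-]; have [P0 [PD PZ]] := PhiS E NE.
  rewrite /T' -scaleN1r; apply: PD; first by apply: hTE => //; exists e.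
  by apply: PZ; apply: R1E.
pose w := fun j => v (lift p j).
have T'rank : has_rank T' n.
  exists w; split; first exact: (indep_lift (p:=p) hvi).
  apply/seteqP; split.
    move=> _ [y _ <-].
    pose d := fun i => cT y i - f y * c0 i.
    have hd : T' y = lc v d by rewrite /T' /R1 /x HcT -lcZ -lcB.
    have dp : d p = 0 by rewrite /d /f divfK ?subrr.
    exists (fun j => d (lift p j)) => //.
    by rewrite hd (lc_split v p) dp scale0r add0r.
  move=> _ [c' _ <-].
  have [y hy] := hsur (ext p c' 0).
  have hcy : forall i, cT y i = ext p c' 0 i by apply: indep_inj hvi _; rewrite -HcT.
  have fy : f y = 0 by rewrite /f hcy ext_p mul0r.
  exists y => //.
  by rewrite /T' /R1 fy scale0r subr0 hy lc_ext scale0r add0r.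
have [Ts' [HTs' HTsum]] := IH T' (conj (conj T'_lin T'c) T'E) T'rank.
have R1rank : has_rank R1 1.
  exists (fun _ => x); split.
    move=> c; rewrite big_ord1 => h i; rewrite (ord1 i).
    by move/eqP: h; rewrite scaler_eq0 (negbTE x0) orbF => /eqP.
  apply/seteqP; split.
    by move=> _ [y _ <-]; exists (fun=> f y) => //; rewrite big_ord1.
  move=> _ [c _ <-]; rewrite big_ord1.
  have [y1 hy1] := hsur (fun i => ((i == p)%:R : C)).
  have hc1 : forall i, cT y1 i = (i == p)%:R by apply: indep_inj hvi _; rewrite -HcT.
  have fy1 : f y1 = (c0 p)^-1 by rewrite /f hc1 eqxx mul1r.
  exists ((c 0 * c0 p) *: y1) => //.
  by rewrite /R1 fZ fy1 mulfK.
exists (fun i => if unlift ord0 i is Some j then Ts' j else R1); split.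
  move=> i; case: (unlift ord0 i) => [j|]; first exact: HTs'.
  split => //; split; first by split.
  by move=> E NE _ [e Ee <-]; apply: R1E.
move=> y; rewrite big_ord_recl unlift_none.
under eq_bigr => i _ do rewrite liftK.
by rewrite -HTsum /T' addrC subrK.
Qed.

End M.

Unset Implicit Arguments.

Theorem mainTheorem7 (R : realType) (X : completeNormedModType R[i])
  (N : set (set X)) (Phi : set X -> set X) (T : X -> X) (n : nat) :
  nest N -> support_function N Phi -> M_Phi N Phi T -> has_rank T n ->
  exists Ts : 'I_n -> X -> X,
    (forall i, has_rank (Ts i) 1 /\ M_Phi N Phi (Ts i)) /\
    (forall x, T x = \sum_(i < n) Ts i x).
Proof.
move=> hN hPhi hM hr.
exact: (main_ind hN hPhi hM hr).
Qed.
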